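(* Let $G=(V,E)$ be a connected graph with maximum degree $\Delta\ge 2$, $s\in V$, $\mathcal{T}$ the layering tree of $G$ with respect to $s$, and $\ell\ge\ell(\mathcal{T})$ an integer. Let $P$ be a part of $\mathcal{T}$ at depth $k$ and let $i\ge k$. Then $|\mathrm{comp}(P)\cap L_{\le i}|\le \Delta^{\ell+i-k+2}$.
   Context: For a connected graph $G$ and root $s\in V(G)$, the BFS layers are $L_i=\{v: d_G(s,v)=i\}$ for $i\ge 0$, with $L_{\le k}=L_0\cup\dots\cup L_k$, $L_{\ge k}=\bigcup_{j\ge k}L_j$, $L_{-1}=\emptyset$. For each $i\ge 0$, let $S_i^1,\dots,S_i^{s_i}$ be the connected components of $G\setminus L_{\le i-1}$ (i.e. of $G[L_{\ge i}]$), and let $P_i^j=S_i^j\cap L_i$; the nonempty sets $P_i^j$ are the parts at layer (depth) $i$, and the set $\mathcal{P}$ of all parts over all layers partitions $V(G)$. The layering tree $\mathcal{T}=(\mathcal{P},\mathcal{E})$ has the parts as vertices, with $(P,P')\in\mathcal{E}$ iff some $u\in P$, $u'\in P'$ are adjacent in $G$; it is rooted at $\{s\}$. Its length is $\ell(\mathcal{T})=\max_{P\in\mathcal{P}}\max_{u,v\in P} d_G(u,v)$ (distances measured in $G$). For a part $P$, $\mathrm{comp}(P)$ is the union of $P$ and all parts that are descendants of $P$ in the rooted tree $\mathcal{T}$; if $P$ is at layer $k$, this is the connected component of $G\setminus L_{\le k-1}$ containing $P$. *)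

(* Defs.v *)
(* finite simple graphs as symmetric irreflexive relations. *)
From mathcomp Require Import all_boot.
Set Implicit Arguments. Unset Strict Implicit. Unset Printing Implicit Defensive.

Section Layering.
Variables (T : finType) (e : rel T).

Fixpoint ball (n : nat) (u : T) : {set T} :=
  if n is m.+1 then ball m u :|: [set y | [exists x in ball m u, e x y]]
  else [set u].

(* graph distance d_G(u,v) (in a connected graph it is < #|T|) *)
Definition dist (u v : T) : nat := find (fun n => v \in ball n u) (iota 0 #|T|).

Definition max_degree : nat := \max_(v : T) #|[set w | e v w]|.

Variable s : T.

Definition layer (i : nat) : {set T} := [set v | dist s v == i].
Definition layer_le (i : nat) : {set T} := [set v | dist s v <= i].
Definition layer_ge (i : nat) : {set T} := [set v | i <= dist s v].

Definition restr (k : nat) : rel T :=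
  [rel a b | [&& e a b, a \in layer_ge k & b \in layer_ge k]].

(* P is a part at layer k: P = S cap L_k, S a component of G[L_{>=k}], P nonempty *)
Definition is_part (k : nat) (P : {set T}) : Prop :=
  exists2 x, x \in layer k & P = [set y in layer k | connect (restr k) x y].

Definition part_comp (k : nat) (P : {set T}) : {set T} :=
  [set y | [exists x in P, connect (restr k) x y]].

Definition same_part (u v : T) : bool :=
  (dist s u == dist s v) && connect (restr (dist s u)) u v.

Definition layering_length : nat :=
  \max_(u : T) \max_(v | same_part u v) dist u v.

End Layering.

(* Main.v *)
Require Import Defs.
From mathcomp Require Import all_boot.
Set Implicit Arguments. Unset Strict Implicit. Unset Printing Implicit Defensive.

Lemma ballS (T : finType) (e : rel T) n u : ball e n u \subset ball e n.+1 u.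
Proof. by rewrite /= subsetUl. Qed.

Lemma ball_mono (T : finType) (e : rel T) m n u : m <= n -> ball e m u \subset ball e n u.
Proof.
elim: n => [|n IH]; first by rewrite leqn0 => /eqP ->.
rewrite leq_eqVlt => /orP [/eqP -> //| ltmn].
apply/subsetP => x hx; apply: (subsetP (ballS e n u)); exact: (subsetP (IH ltmn)).
Qed.

Lemma ball_self (T : finType) (e : rel T) n u : u \in ball e n u.
Proof. apply: (subsetP (ball_mono e u (leq0n n))); by rewrite /= inE. Qed.

Lemma ball_step (T : finType) (e : rel T) n u w y :
  w \in ball e n u -> e w y -> y \in ball e n.+1 u.
Proof. move=> hw hy /=; rewrite inE; apply/orP; right; rewrite inE; apply/existsP; exists w; by rewrite hw. Qed.

Lemma ball_trans (T : finType) (e : rel T) a b x z y :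
  z \in ball e a x -> y \in ball e b z -> y \in ball e (a + b) x.
Proof.
move=> hz; elim: b y => [|b IH] y /=.
  by rewrite inE addn0 => /eqP ->.
rewrite inE => /orP [hy|].
  rewrite addnS; apply: (subsetP (ballS _ _ _)); exact: IH.
rewrite inE => /existsP [w /andP [hw hwy]].
rewrite addnS; exact: ball_step (IH _ hw) hwy.
Qed.

Lemma ball_path (T : finType) (e : rel T) u p :
  path e u p -> last u p \in ball e (size p) u.
Proof.
elim/last_ind: p => [|p x IH] /=; first by rewrite inE.
rewrite rcons_path last_rcons size_rcons => /andP [hp hx].
exact: ball_step (IH hp) hx.
Qed.

Lemma conn_ball (T : finType) (e : rel T) u v :
  connect e u v -> exists2 n, n < #|T| & v \in ball e n u.
Proof.
move/connectP => [p hp ->].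
case: (shortenP hp) => p' hp' hu _.
exists (size p'); last exact: ball_path.
have := card_uniqP hu. move=> /= <-.
by apply: max_card.
Qed.

Lemma dist_le (T : finType) (e : rel T) u v n :
  v \in ball e n u -> dist e u v <= n.
Proof.
move=> hv; rewrite /dist.
case: (ltnP n #|T|) => hn.
  rewrite leqNgt; apply/negP => /(before_find 0).
  by rewrite nth_iota // add0n hv.
apply: leq_trans hn; have := find_size (fun n => v \in ball e n u) (iota 0 #|T|).
by rewrite size_iota.
Qed.

Lemma dist_ball (T : finType) (e : rel T) u v :
  connect e u v -> v \in ball e (dist e u v) u.
Proof.
move=> /conn_ball [n hn hv].
have hh : has (fun n => v \in ball e n u) (iota 0 #|T|).
  by apply/hasP; exists n => //; rewrite mem_iota.
have := nth_find 0 hh; rewrite nth_iota ?add0n //.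
by move: hh; rewrite has_find size_iota.
Qed.
Definition front (T : finType) (e : rel T) n u : {set T} :=
  if n is m.+1 then ball e n u :\: ball e m u else ball e 0 u.
Definition nbr (T : finType) (e : rel T) (A : {set T}) : {set T} :=
  \bigcup_(x in A) [set y | e x y].

Lemma front_sub (T : finType) (e : rel T) n u :
  ball e n.+1 u :\: ball e n u \subset nbr e (front e n u).
Proof.
apply/subsetP => y; rewrite inE => /andP [hy].
rewrite /= inE (negbTE hy) /= inE => /existsP [w /andP [hw hwy]].
apply/bigcupP; exists w; last by rewrite inE.
case: n hw hy => [|m] hw hy //=.
rewrite inE hw andbT; apply/negP => hwm.
by rewrite (ball_step hwm hwy) in hy.
Qed.

Lemma card_nbr (T : finType) (e : rel T) D (A : {set T}) :
  (forall v, #|[set w | e v w]| <= D) -> #|nbr e A| <= #|A| * D.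
Proof.
move=> hD; rewrite -sum_nat_const /nbr.
apply: leq_trans (_ : \sum_(x in A) #|[set y | e x y]| <= _); last first.
  by apply: leq_sum => x _; exact: hD.
apply: (big_rec2 (fun (U : {set T}) (S : nat) => #|U| <= S)); first by rewrite cards0.
move=> x U S _ hUS; apply: leq_trans (leq_card_setU _ _) _.
exact: leq_add.
Qed.

Lemma front_card (T : finType) (e : rel T) D u :
  (forall v, #|[set w | e v w]| <= D) -> forall n, #|front e n u| <= D ^ n.
Proof.
move=> hD; elim => [|n IH]; first by rewrite /= cards1.
apply: leq_trans (subset_leq_card (front_sub e n u)) _.
apply: leq_trans (card_nbr _ hD) _.
by rewrite expnS mulnC leq_mul2l IH orbT.
Qed.

Lemma ball_card (T : finType) (e : rel T) D u :
  2 <= D -> (forall v, #|[set w | e v w]| <= D) -> forall n, #|ball e n u| < D ^ n.+1.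
Proof.
move=> h2 hD; elim => [|n IH]; first by rewrite /= cards1 expn1.
rewrite -(cardsID (ball e n u) (ball e n.+1 u)).
have h1 : #|ball e n.+1 u :&: ball e n u| <= #|ball e n u|.
  by apply: subset_leq_card; apply: subsetIr.
have h3 := front_card u hD n.+1.
rewrite /front in h3.
have h4 : D ^ n.+1 + D ^ n.+1 <= D ^ n.+2.
  by rewrite addnn -mul2n (expnS D n.+1) leq_mul2r h2 orbT.
apply: leq_trans h4.
rewrite -addSn; apply: leq_add => //; exact: leq_ltn_trans h1 IH.
Qed.
Lemma restr_sym (T : finType) (e : rel T) s k :
  symmetric e -> symmetric (restr e s k).
Proof. by move=> hs a b; rewrite /restr /= hs; case: (e b a) => //=; rewrite andbC. Qed.

Lemma restr_ge (T : finType) (e : rel T) s k a b :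
  connect (restr e s k) a b -> a \in layer_ge e s k -> b \in layer_ge e s k.
Proof.
move/connectP => [p hp ->]; elim: p a hp => [|c p IH] a //= /andP [hac hp] _.
apply: IH hp _; by move: hac => /and3P [].
Qed.

Lemma down (T : finType) (e : rel T) (e_conn : forall x y : T, connect e x y) s k :
  forall m y, dist e s y = k + m ->
  exists2 z, dist e s z = k & connect (restr e s k) z y /\ y \in ball e m z.
Proof.
elim => [|m IH] y hy.
  by exists y; [rewrite hy addn0 | split; [exact: connect0 | exact: ball_self]].
have hb := dist_ball (e_conn s y); rewrite hy addnS /= inE in hb.
case/orP: hb => [hb|].
  by have := dist_le hb; rewrite hy addnS ltnn.
rewrite inE => /existsP [w /andP [hw hwy]].
have hw1 := dist_le hw.
have hw2 : k + m <= dist e s w.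
  rewrite leqNgt; apply/negP => hlt.
  have := dist_le (ball_step (dist_ball (e_conn s w)) hwy).
  by rewrite hy addnS ltnS leqNgt hlt.
have hwe : dist e s w = k + m by apply/eqP; rewrite eqn_leq hw1 hw2.
have [z hz [hzw hwz]] := IH w hwe.
exists z => //; split; last exact: ball_step hwz hwy.
apply: connect_trans hzw (connect1 _).
by rewrite /restr /= hwy !inE hwe hy leq_addr addnS ltnW // ltnS leq_addr.
Qed.

Theorem mainTheorem5 (T : finType) (e : rel T)
    (e_sym : symmetric e) (e_irr : irreflexive e)
    (e_conn : forall x y : T, connect e x y)
    (s : T) (l : nat)
    (hDelta : 2 <= max_degree e)
    (hl : layering_length e s <= l)
    (k : nat) (P : {set T}) (hP : is_part e s k P)
    (i : nat) (hik : k <= i) :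
  #|part_comp e s k P :&: layer_le e s i| <= max_degree e ^ (l + (i - k) + 2).
Proof.
case: hP => x hx hPx.
have hsub : part_comp e s k P :&: layer_le e s i \subset ball e (l + (i - k)) x.
  apply/subsetP => y; rewrite !inE => /andP [/existsP [x' /andP [hx' hx'y]] hyi].
  rewrite hPx inE in hx'; case/andP: hx' => hx'k hxx'.
  have hyk : k <= dist e s y.
    have := restr_ge hx'y; rewrite !inE; apply; by move: hx'k; rewrite inE => /eqP ->.
  have := @down T e e_conn s k (dist e s y - k) y; rewrite subnKC //.
  case=> // z hz [hzy hyz].
  have hcs := sym_connect_sym (restr_sym s k e_sym).
  have hxz : connect (restr e s k) x z.
    apply: connect_trans hxx' _; apply: connect_trans hx'y _; by rewrite hcs.
  have hdxz : dist e x z <= l.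
    apply: leq_trans hl; rewrite /layering_length.
    apply: leq_trans _ (@leq_bigmax _ (fun u => \max_(v | same_part e s u v) dist e u v) x).
    apply: (@leq_bigmax_cond _ _ (fun v => dist e x v)).
    rewrite /same_part hz; move: hx; rewrite inE => /eqP ->; by rewrite eqxx.
  have hzb : z \in ball e l x.
    exact: (subsetP (ball_mono e x hdxz)) (dist_ball (e_conn x z)).
  apply: (subsetP (ball_mono e x _)) (ball_trans hzb hyz).
  by rewrite leq_add2l leq_sub2r.
apply: leq_trans (subset_leq_card hsub) _.
have hdeg : forall v, #|[set w | e v w]| <= max_degree e.
  move=> v; exact: (@leq_bigmax _ (fun v => #|[set w | e v w]|)).
apply: leq_trans (ltnW (ball_card x hDelta hdeg _)) _.
rewrite leq_pexp2l ?addn2 //; exact: leq_trans hDelta.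
Qed.
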